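(* Let $r:\mathbb X\to[0,1)$ and $\alpha=\frac{r}{1-r}:\mathbb X\to[0,\infty)$. Suppose that, for all $x\in\mathbb X$, \[ |z(x)|\prod_{\substack{X\Subset\mathbb X:\\ x\in X}}\max\Big\{|W(X)|,\ 1+|W(X)-1|\,\alpha^S \ \Big|\ \varnothing\neq S\subset X\setminus\{x\}\Big\}\le r(x). \] Then for every $\Lambda\Subset\mathbb X$ one has $Z(\Lambda)\neq 0$, and $\sup_{\Lambda\Subset\mathbb X\setminus\{x\}}|\widehat z(x,\Lambda)|\le r(x)<1$ for all $x\in\mathbb X$. Moreover, for all $\Lambda\Subset\mathbb X$, \[ 0<(1-r)^\Lambda\le|Z(\Lambda)|\le(1+r)^\Lambda . \]
   Context: $\mathbb X$ is a finite or countably infinite set; $X\Subset\mathbb X$ means $X$ is a finite subset of $\mathbb X$, and $\mathbf F$ denotes the set of finite subsets of $\mathbb X$. Fix an activity $z:\mathbb X\to\mathbb C$ and an interaction $W:\mathbf F\to\mathbb C$; write $W(x)=W(\{x\})$. For a function $f$ on $\mathbb X$ and $X\Subset\mathbb X$ write $f^X=\prod_{x\in X}f(x)$ (empty products equal $1$); e.g. $(1-r)^\Lambda=\prod_{x\in\Lambda}(1-r(x))$. The Boltzmann factor is $\kappa(X)=\prod_{S\subset X,\,S\neq\varnothing}W(S)$. For $\Lambda\Subset\mathbb X$ the partition function is $Z(\Lambda)=\sum_{X\subset\Lambda}z^X\kappa(X)$; for $x\in\mathbb X\setminus\Lambda$ the pinned partition function is $Z(x,\Lambda)=\sum_{Y\subset\Lambda}z^{\{x\}\cup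 Y}\kappa(\{x\}\cup Y)$ and, when $Z(\Lambda)\neq0$, the effective activity is $\widehat z(x,\Lambda)=Z(x,\Lambda)/Z(\Lambda)$. In the displayed maximum, the max is taken over $|W(X)|$ together with all numbers $1+|W(X)-1|\alpha^S$ for nonempty $S\subset X\setminus\{x\}$ (so for $X=\{x\}$ the factor is $|W(x)|$). The product over all finite $X\ni x$ is a product of nonnegative numbers, understood in $[0,\infty]$. *)

(* Defs.v *)
From HB Require Import structures.
From mathcomp Require Import all_boot all_order all_algebra.
From mathcomp Require Import finmap.
From mathcomp.real_closed Require Import complex.
From mathcomp Require Import reals.
Set Implicit Arguments. Unset Strict Implicit. Unset Printing Implicit Defensive.
Import Order.TTheory GRing.Theory Num.Theory.
Local Open Scope ring_scope.


Section Defs.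
Variables (R : realType) (T : countType).
Variables (z : T -> R[i]) (W : {fset T} -> R[i]).

Definition fprod (f : T -> R[i]) (X : {fset T}) : R[i] := \prod_(x <- X) f x.
Definition fprodR (f : T -> R) (X : {fset T}) : R := \prod_(x <- X) f x.

Definition kappa (X : {fset T}) : R[i] :=
  \prod_(S <- fpowerset X | S != fset0%fset) W S.

Definition Zpart (L : {fset T}) : R[i] :=
  \sum_(X <- fpowerset L) fprod z X * kappa X.

Definition Zpin (x : T) (L : {fset T}) : R[i] :=
  \sum_(Y <- fpowerset L) fprod z (x |` Y)%fset * kappa (x |` Y)%fset.

Definition zhat (x : T) (L : {fset T}) : R[i] := Zpin x L / Zpart L.

Definition wfactor (alpha : T -> R) (x : T) (X : {fset T}) : R :=
  \big[Num.max/Normc.normc (W X)]_(S <- fpowerset (X `\ x)%fset | S != fset0%fset)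
     (1 + Normc.normc (W X - 1) * fprodR alpha S).

End Defs.

(* Main.v *)
Require Import Defs.
From HB Require Import structures.
From mathcomp Require Import all_boot all_order all_algebra.
From mathcomp Require Import finmap.
From mathcomp.real_closed Require Import complex.
From mathcomp Require Import reals.
From mathcomp Require Import ring lra.
Import Order.TTheory GRing.Theory Num.Theory.
Set Implicit Arguments. Unset Strict Implicit. Unset Printing Implicit Defensive.
Local Open Scope fset_scope.
Local Open Scope ring_scope.
Section Aux.
Variable R : realType.

Lemma normc_ge0 (x : R[i]) : 0 <= Normc.normc x.
Proof. by case: x => a b; rewrite /Normc.normc sqrtr_ge0. Qed.

Lemma normcD (x y : R[i]) : Normc.normc (x + y) <= Normc.normc x + Normc.normc y.
Proof. exact: (@le_normcD R x y). Qed.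

Lemma normcNN (x : R[i]) : Normc.normc (- x) = Normc.normc x.
Proof. exact: (@normcN R x). Qed.

Lemma normcB (x y : R[i]) : Normc.normc x - Normc.normc y <= Normc.normc (x + y).
Proof.
have := normcD (x + y) (- y); rewrite addrK normcNN => h.
by rewrite lerBlDr.
Qed.

Lemma bigmax_ge_base (I : Type) (s : seq I) (P : pred I) (f : I -> R) m :
  m <= \big[Num.max/m]_(i <- s | P i) f i.
Proof.
elim: s => [|a s IH]; rewrite ?big_nil ?big_cons //.
by case: (P a) => //; rewrite le_max IH orbT.
Qed.

Lemma bigmax_ge_term (I : eqType) (s : seq I) (P : pred I) (f : I -> R) m a :
  a \in s -> P a -> f a <= \big[Num.max/m]_(i <- s | P i) f i.
Proof.
elim: s => [|b s IH] //; rewrite in_cons big_cons => /orP[/eqP <-|aS] Pa.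
  by rewrite Pa le_max lexx.
by case: (P b); rewrite ?le_max IH ?orbT.
Qed.

Lemma bigmax_le (I : eqType) (s : seq I) (P : pred I) (f : I -> R) m b :
  m <= b -> (forall i, i \in s -> P i -> f i <= b) ->
  \big[Num.max/m]_(i <- s | P i) f i <= b.
Proof.
move=> mb; elim: s => [|a s IH] H; rewrite ?big_nil ?big_cons //.
have IH' : \big[Num.max/m]_(i <- s | P i) f i <= b.
  by apply: IH => i iS; apply: H; rewrite in_cons iS orbT.
case Pa: (P a) => //; rewrite ge_max IH' andbT; apply: H => //.
by rewrite in_cons eqxx.
Qed.

End Aux.
Section PS.
Variable (T : choiceType) (Rt : Type) (idx : Rt) (op : Monoid.com_law idx).

Lemma pow_sup (U L : {fset T}) (F : {fset T} -> Rt) : U `<=` L ->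
  \big[op/idx]_(Y <- fpowerset L | U `<=` Y) F Y =
  \big[op/idx]_(Y <- fpowerset (L `\` U)) F (U `|` Y).
Proof.
move=> UL; rewrite big_fset_condE.
have -> : [fset Y in fpowerset L | U `<=` Y] =
          [fset U `|` Y | Y in fpowerset (L `\` U)].
  apply/fsetP => Y; apply/idP/idP.
    rewrite !inE /= fpowersetE => /andP[YL UY].
    apply/imfsetP; exists (Y `\` U); first by rewrite fpowersetE fsetSD.
    apply/fsetP => y; rewrite !inE; case yU: (y \in U) => /=; last by [].
    by have := fsubsetP UY y; rewrite yU => ->.
  case/imfsetP => Y' /=; rewrite fpowersetE => Y'L ->.
  rewrite !inE /= fpowersetE fsubsetUl andbT fsubUset UL /=.
  by apply: fsubset_trans Y'L (fsubsetDl _ _).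
rewrite big_imfset /=; first done.
move=> Y1 Y2; rewrite !fpowersetE => H1 H2 e; apply/fsetP => y.
move/fsetP: e => e; have := e y; rewrite !inE.
case yU: (y \in U) => //= _.
have h1 := fsubsetP H1 y; have h2 := fsubsetP H2 y; rewrite !inE yU /= in h1 h2.
by case: (y \in Y1) h1 => [/(_ isT)|] //; case: (y \in Y2) h2 => [/(_ isT)|].
Qed.

Lemma pow_splitU1 (x : T) (A : {fset T}) (F : {fset T} -> Rt) : x \notin A ->
  \big[op/idx]_(S <- fpowerset (x |` A)) F S =
  op (\big[op/idx]_(S <- fpowerset A) F S) (\big[op/idx]_(S <- fpowerset A) F (x |` S)).
Proof.
move=> xA; rewrite (big_fsetID _ (fun S : {fset T} => [fset x] `<=` S)) /= Monoid.mulmC.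
congr (op _ _).
  apply: eq_fbigl => S; rewrite !inE /= !fpowersetE fsub1set.
  apply/idP/idP.
    case/andP=> SxA xS; apply/fsubsetP => y yS; have := fsubsetP SxA y yS.
    rewrite !inE; case: eqP => [e|]//; by rewrite -e yS in xS.
  move=> SA; have -> : x \notin S by apply: contra xA; apply: (fsubsetP SA).
  by rewrite andbT; apply: fsubset_trans SA (fsubsetU1 _ _).
rewrite -big_fset_condE pow_sup ?fsub1set ?fset11 //.
have -> : (x |` A) `\` [fset x] = A; last by [].
apply/fsetP => y; rewrite !inE; case: eqP => [->|]//=; first by rewrite (negbTE xA).
by rewrite !inE eqxx.
Qed.

Lemma pow_split_at (u : T) (L : {fset T}) (F : {fset T} -> Rt) : u \in L ->
  \big[op/idx]_(S <- fpowerset L) F S =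
  op (\big[op/idx]_(S <- fpowerset (L `\ u)) F S)
     (\big[op/idx]_(S <- fpowerset (L `\ u)) F (u |` S)).
Proof.
move=> uL; rewrite -pow_splitU1 ?fsetD1K //.
by rewrite !inE eqxx.
Qed.
End PS.

Ltac fset_eq := apply/fsetP => ?; rewrite !inE;
  do ![case: (_ \in _) | case: (_ == _)] => //.

Section Main.
Variables (R : realType) (T : countType) (z : T -> R[i]) (r : T -> R).
Hypothesis hr : forall x, 0 <= r x < 1.
Local Notation nc := (@Normc.normc R).
Definition al x := r x / (1 - r x).

Definition Pp (W : {fset T} -> R[i]) (V L : {fset T}) : R[i] :=
  \sum_(Y <- fpowerset L) Defs.fprod z (V `|` Y) * kappa W (V `|` Y).

Definition Hyp (W : {fset T} -> R[i]) (D : {fset T}) :=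
  forall u, u \in D -> forall F : {fset {fset T}},
    (forall X, X \in F -> (u \in X) && (X `<=` D)) -> [fset u] \in F ->
    nc (z u) * \prod_(X <- F) wfactor W al u X <= r u.

Definition WQ (x : T) (Q : {fset {fset T}}) (W : {fset T} -> R[i]) X :=
  if X \in Q then W X * W (x |` X) else W X.

Lemma kappa_ext (W1 W2 : {fset T} -> R[i]) A : (forall X, W1 X = W2 X) -> kappa W1 A = kappa W2 A.
Proof. by move=> e; apply: eq_bigr => X _; rewrite e. Qed.

Lemma Pp_ext (W1 W2 : {fset T} -> R[i]) V L : (forall X, W1 X = W2 X) -> Pp W1 V L = Pp W2 V L.
Proof. by move=> e; apply: eq_bigr => Y _; rewrite (kappa_ext _ e). Qed.

Lemma kappa_mod (W1 W2 : {fset T} -> R[i]) S c A : S != fset0 -> W2 S = W1 S * c ->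
  (forall X, X != S -> W2 X = W1 X) ->
  kappa W2 A = kappa W1 A * (if S `<=` A then c else 1).
Proof.
move=> S0 eS eX; rewrite /kappa !big_mkcond /=.
have -> : \prod_(i <- fpowerset A) (if i != fset0 then W2 i else 1) =
          \prod_(i <- fpowerset A) ((if i != fset0 then W1 i else 1) *
                                     (if i == S then c else 1)).
  apply: eq_bigr => X _; case: (eqVneq X S) => [->|XS]; first by rewrite S0 eS.
  by rewrite eX // mulr1.
rewrite big_split /= -big_mkcond /=; congr (_ * _).
case SA: (S `<=` A).
  rewrite (bigD1_seq S) ?fpowersetE ?fset_uniq //= eqxx big1 ?mulr1 //.
  by move=> X /negbTE ->.
rewrite big1_fset // => X; rewrite fpowersetE => XA _.
by case: eqP => // e; rewrite -e XA in SA.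
Qed.

Lemma Pp_mod (W1 W2 : {fset T} -> R[i]) S c V L : S != fset0 -> W2 S = W1 S * c ->
  (forall X, X != S -> W2 X = W1 X) -> S `<=` V `|` L -> V `&` L = fset0 ->
  Pp W2 V L = Pp W1 V L + (c - 1) * Pp W1 (V `|` (S `&` L)) (L `\` (S `&` L)).
Proof.
move=> S0 eS eX SVL VL.
rewrite /Pp (eq_big_seq (fun Y => Defs.fprod z (V `|` Y) * kappa W1 (V `|` Y) +
   (if S `&` L `<=` Y then (c - 1) * (Defs.fprod z (V `|` Y) * kappa W1 (V `|` Y)) else 0))).
  rewrite big_split /=; congr (_ + _).
  rewrite -big_mkcond /= pow_sup ?fsubsetIr // -mulr_sumr.
  by congr (_ * _); apply: eq_bigr => Y _; rewrite fsetUA.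
move=> Y; rewrite fpowersetE => YL.
rewrite (@kappa_mod W1 W2 S c (V `|` Y) S0 eS eX).
have -> : (S `<=` V `|` Y) = (S `&` L `<=` Y).
  apply/idP/idP.
    move=> SVY; apply/fsubsetP => y; rewrite !inE => /andP[yS yL].
    have := fsubsetP SVY y yS; rewrite !inE => /orP[yV|//].
    by move/fsetP: VL => /(_ y); rewrite !inE yV yL.
  move=> SLY; apply/fsubsetP => y yS; have := fsubsetP SVL y yS.
  rewrite !inE => /orP[->//|yL]; apply/orP; right.
  by apply: (fsubsetP SLY); rewrite !inE yS yL.
by case: (_ `<=` _); rewrite mulrC; ring.
Qed.

Lemma Pp_split (W : {fset T} -> R[i]) V L u : u \in L ->
  Pp W V L = Pp W V (L `\ u) + Pp W (u |` V) (L `\ u).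
Proof.
move=> uL; rewrite /Pp (pow_split_at _ _ uL); congr (_ + _).
by apply: eq_bigr => Y _; rewrite fsetUCA fsetUA.
Qed.

Lemma al_ge0 x : 0 <= al x.
Proof. by have /andP[h0 h1] := hr x; rewrite /al divr_ge0 // subr_ge0 ltW. Qed.

Lemma fprodR_ge0 (a : T -> R) S : (forall x, 0 <= a x) -> 0 <= fprodR a S.
Proof. by move=> h; rewrite /fprodR prodr_ge0. Qed.

Lemma wf_ge_base (W : {fset T} -> R[i]) a u X : nc (W X) <= wfactor W a u X.
Proof. exact: bigmax_ge_base. Qed.

Lemma wf_ge0 (W : {fset T} -> R[i]) a u X : 0 <= wfactor W a u X.
Proof. exact: le_trans (normc_ge0 _) (wf_ge_base _ _ _ _). Qed.

Lemma wf_ge_term (W : {fset T} -> R[i]) a u X S :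
  S `<=` X `\ u -> S != fset0 ->
  1 + nc (W X - 1) * fprodR a S <= wfactor W a u X.
Proof.
move=> SX S0; rewrite /wfactor.
apply: (@bigmax_ge_term _ _ _ (fun S => S != fset0)
   (fun S => 1 + nc (W X - 1) * fprodR a S)) => //.
by rewrite fpowersetE.
Qed.

Lemma wf_ge1 (W : {fset T} -> R[i]) a u x X : (forall y, 0 <= a y) ->
  x \in X -> x != u -> 1 <= wfactor W a u X.
Proof.
move=> a0 xX xu; apply: le_trans (wf_ge_term (S := [fset x]) _ _ _ _).
- by rewrite lerDl mulr_ge0 ?normc_ge0 ?fprodR_ge0.
- by rewrite fsub1set !inE xu.
- by apply/eqP => /fsetP /(_ x); rewrite !inE eqxx.
Qed.

Lemma wf_same (W1 W2 : {fset T} -> R[i]) a u X : W1 X = W2 X ->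
  wfactor W1 a u X = wfactor W2 a u X.
Proof. by move=> e; rewrite /wfactor e. Qed.

Lemma wf_mod (W W' : {fset T} -> R[i]) a u x X : (forall y, 0 <= a y) ->
  x \notin X -> W' X = W X * W (x |` X) ->
  wfactor W' a u X <= wfactor W a u X * wfactor W a u (x |` X).
Proof.
move=> a0 xX e.
apply: bigmax_le.
  by rewrite e Normc.normcM ler_pM ?normc_ge0 ?wf_ge_base.
move=> S; rewrite fpowersetE => SX S0.
set c := fprodR a S; have c0 : 0 <= c by apply: fprodR_ge0.
set m1 := wfactor W a u X; set m2 := wfactor W a u (x |` X).
have h1 : nc (W X) <= m1 by apply: wf_ge_base.
have h2 : 1 + nc (W X - 1) * c <= m1 by apply: wf_ge_term.
have h3 : 1 + nc (W (x |` X) - 1) * c <= m2.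
  apply: wf_ge_term => //; apply: fsubset_trans SX _.
  by apply: fsetSD; apply: fsubsetU1.
have h4 : nc (W X * W (x |` X) - 1) <= nc (W X) * nc (W (x |` X) - 1) + nc (W X - 1).
  have -> : W X * W (x |` X) - 1 = W X * (W (x |` X) - 1) + (W X - 1) by ring.
  by rewrite -Normc.normcM normcD.
have n1 := normc_ge0 (W X); have n2 := normc_ge0 (W (x |` X) - 1).
have n3 := normc_ge0 (W X - 1).
have m10 : 0 <= m1 by apply: wf_ge0.
rewrite e.
have : nc (W X * W (x |` X) - 1) * c <= (nc (W X) * nc (W (x |` X) - 1) + nc (W X - 1)) * c.
  by rewrite ler_wpM2r.
have : m1 * (1 + nc (W (x |` X) - 1) * c) <= m1 * m2 by rewrite ler_wpM2l.
have : nc (W X) * (nc (W (x |` X) - 1) * c) <= m1 * (nc (W (x |` X) - 1) * c).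
  by rewrite ler_wpM2r ?mulr_ge0.
nra.
Qed.

Lemma Hyp_mono W (D D' : {fset T}) : D `<=` D' -> Hyp W D' -> Hyp W D.
Proof.
move=> DD H u uD F HF uF; apply: H => //; first exact: (fsubsetP DD).
move=> X XF; case/andP: (HF X XF) => -> XD /=; exact: fsubset_trans XD DD.
Qed.

Lemma Hyp_WQ W (D : {fset T}) x Q : x \notin D -> Hyp W (x |` D) ->
  Hyp (WQ x Q W) D.
Proof.
move=> xD H u uD F HF uF.
have xu : x != u by apply: contraNneq xD => ->.
have xF : forall X, X \in F -> x \notin X.
  move=> X XF; case/andP: (HF X XF) => _ XD; apply: contra xD; exact: (fsubsetP XD).
set F2 := F `|` [fset x |` X | X in F].
have := H u _ F2.
have eq : \prod_(X <- F2) wfactor W al u X =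
          \prod_(X <- F) (wfactor W al u X * wfactor W al u (x |` X)).
  rewrite (big_fsetID _ (fun X : {fset T} => x \in X)) /= mulrC big_split /=.
  congr (_ * _).
    apply: eq_fbigl => X; rewrite !inE /=; apply/idP/idP.
      case/andP => /orP[//|/imfsetP[X' /= _ ->]]; by rewrite !inE eqxx.
    by move=> XF; rewrite XF /= xF.
  transitivity (\prod_(X <- [fset x |` X | X in F]) wfactor W al u X).
    apply: eq_fbigl => X; rewrite !inE /=; apply/idP/idP.
      case/andP => /orP[XF|//]; by rewrite (negbTE (xF X XF)).
    move=> XF; rewrite XF orbT /=; case/imfsetP: XF => X' _ ->.
    by rewrite !inE eqxx.
  rewrite big_imfset //= => X1 X2 X1F X2F e; apply/fsetP => y.
  move/fsetP: e => /(_ y); rewrite !inE; case: eqP => [->|]//= _.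
  by rewrite (negbTE (xF _ X1F)) (negbTE (xF _ X2F)).
rewrite eq => {}H; apply: le_trans (H _ _ _).
- apply: ler_wpM2l; first exact: normc_ge0.
  rewrite big_seq [X in _ <= X]big_seq; apply: ler_prod => X XF.
  rewrite wf_ge0 /=; case/andP: (HF X XF) => uX XD.
  rewrite /WQ; case XQ: (X \in Q).
    by apply: wf_mod => //; [exact: al_ge0 | exact: xF | rewrite /WQ XQ].
  rewrite (wf_same (W2 := W)); last by rewrite /WQ XQ.
  rewrite ler_peMr ?wf_ge0 //; apply: (@wf_ge1 W al u x (x |` X)) => //; first exact: al_ge0.
  by rewrite !inE eqxx.
- by rewrite !inE uD orbT.
- move=> X; rewrite !inE => /orP[XF|/imfsetP[X' /= X'F ->]].
    case/andP: (HF X XF) => -> XD /=; apply: fsubset_trans XD (fsubsetU1 _ _).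
  case/andP: (HF X' X'F) => uX' X'D; rewrite !inE uX' orbT /=.
  by apply: fsetUS.
- by rewrite !inE uF.
Qed.

Definition claim W V L x := x \notin V -> x \notin L -> V `&` L = fset0 ->
  Hyp W (x |` (V `|` L)) -> nc (Pp W (x |` V) L) <= r x * nc (Pp W V L).

Lemma alpha_step W V L u : claim W V (L `\ u) u -> u \in L -> u \notin V ->
  V `&` L = fset0 -> Hyp W (V `|` L) ->
  nc (Pp W (u |` V) (L `\ u)) <= al u * nc (Pp W V L).
Proof.
move=> Hc uL uV VL HW.
have h : nc (Pp W (u |` V) (L `\ u)) <= r u * nc (Pp W V (L `\ u)).
  apply: Hc => //.
  - by rewrite !inE eqxx.
  - apply/fsetP => y; move/fsetP: VL => /(_ y); rewrite !inE.
    by case: (y \in V); case: (y \in L); rewrite ?andbF.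
  - apply: Hyp_mono HW; apply/fsubsetP => y; rewrite !inE.
    by case: eqP => [->|]; rewrite ?uL ?orbT //= => _ /orP[->|/andP[_ ->]]; rewrite ?orbT.
rewrite (Pp_split W V uL).
have := normcB (Pp W V (L `\ u)) (Pp W (u |` V) (L `\ u)).
set a := nc (Pp W V (L `\ u)) in h *; set b := nc (Pp W (u |` V) (L `\ u)) in h *.
set N := nc _ => hN.
have /andP[r0 r1] := hr u.
have r1' : 0 < 1 - r u by rewrite subr_gt0.
have b0 : 0 <= b by apply: normc_ge0.
apply: le_trans (_ : al u * (a - b) <= _); last by rewrite ler_wpM2l ?al_ge0.
rewrite /al mulrAC ler_pdivlMr //.
nra.
Qed.

Lemma alpha_prod W V L :
  (forall W' V' L' y, (#|` L'| < #|` L|)%N -> claim W' V' L' y) ->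
  V `&` L = fset0 -> Hyp W (V `|` L) ->
  forall U, U `<=` L ->
  nc (Pp W (V `|` U) (L `\` U)) <= fprodR al U * nc (Pp W V L).
Proof.
move=> IH VL HW; elim/fset1U_rect => [|u U uU IHU] UL.
  by rewrite fsetU0 fsetD0 /fprodR big_seq_fset0 mul1r.
have uL : u \in L by apply: (fsubsetP UL); rewrite !inE eqxx.
have UL' : U `<=` L by apply: fsubset_trans UL; apply: fsubsetU1.
have {}IHU := IHU UL'.
have uV : u \notin V.
  by apply/negP => uV; move/fsetP: VL => /(_ u); rewrite !inE uV uL.
set V' := V `|` U; set L' := L `\` U.
have uL' : u \in L' by rewrite !inE uU uL.
have uV' : u \notin V' by rewrite !inE (negbTE uV) (negbTE uU).
have VL' : V' `&` L' = fset0.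
  apply/fsetP => y; move/fsetP: VL => /(_ y); rewrite !inE.
  by case: (y \in V); case: (y \in U); case: (y \in L).
have HW' : Hyp W (V' `|` L').
  apply: Hyp_mono HW; apply/fsubsetP => y; rewrite !inE.
  case/orP => [/orP[->//|yU]|/andP[_ ->]]; last by rewrite orbT.
  by rewrite (fsubsetP UL' y yU) orbT.
have Hc : claim W V' (L' `\ u) u.
  apply: IH; rewrite (cardfsD1 u L) uL add1n ltnS.
  by apply: fsubset_leq_card; apply/fsubsetP => y; rewrite !inE => /andP[-> /andP[_ ->]].
have := alpha_step Hc uL' uV' VL' HW'.
have -> : V `|` (u |` U) = u |` V' by rewrite /V' fsetUCA.
have -> : L `\` (u |` U) = L' `\ u.
  by apply/fsetP => y; rewrite !inE; case: (y == u); case: (y \in U).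
move=> h; apply: le_trans h _.
rewrite /fprodR big_fsetU1 //= -[X in _ <= X]mulrA; apply: ler_wpM2l; first exact: al_ge0.
exact: IHU.
Qed.

Lemma Q_bound W V L x :
  (forall W' V' L' y, (#|` L'| < #|` L|)%N -> claim W' V' L' y) ->
  V `&` L = fset0 -> x \notin V `|` L -> Hyp W (x |` (V `|` L)) ->
  forall Q, (forall S, S \in Q -> (S `<=` V `|` L) && (S != fset0)) ->
  nc (Pp (WQ x Q W) V L) <=
    \prod_(S <- Q) wfactor W al x (x |` S) * nc (Pp W V L).
Proof.
move=> IH VL xVL HW; elim/fset1U_rect => [|S Q SQ IHQ] HQ.
  rewrite big_seq_fset0 mul1r (@Pp_ext _ W) //.
have {}IHQ : nc (Pp (WQ x Q W) V L) <=
    \prod_(S <- Q) wfactor W al x (x |` S) * nc (Pp W V L).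
  by apply: IHQ => S' S'Q; apply: HQ; rewrite !inE S'Q orbT.
have /andP[SVL S0] := HQ S (fset1U1 _ _).
set W1 := WQ x Q W; set W2 := WQ x (S |` Q) W.
have eS : W2 S = W1 S * W (x |` S) by rewrite /W2 /W1 /WQ !inE eqxx (negbTE SQ).
have eX : forall X, X != S -> W2 X = W1 X.
  by move=> X XS; rewrite /W2 /W1 /WQ !inE (negbTE XS).
rewrite (Pp_mod S0 eS eX SVL VL).
have HW1 : Hyp W1 (V `|` L) by apply: Hyp_WQ.
have xS : x \notin S by apply: contra xVL; apply: (fsubsetP SVL).
set U := S `&` L.
set c := W (x |` S).
have key : nc (Pp W1 V L + (c - 1) * Pp W1 (V `|` U) (L `\` U)) <=
           wfactor W al x (x |` S) * nc (Pp W1 V L).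
  case: (eqVneq U fset0) => [U0|U0].
    rewrite U0 fsetU0 fsetD0.
    have -> : Pp W1 V L + (c - 1) * Pp W1 V L = c * Pp W1 V L by ring.
    by rewrite Normc.normcM ler_wpM2r ?normc_ge0 ?wf_ge_base.
  have hU := alpha_prod IH VL HW1 (fsubsetIr S L).
  apply: le_trans (normcD _ _) _; rewrite Normc.normcM.
  have ht : 1 + nc (c - 1) * fprodR al U <= wfactor W al x (x |` S).
    apply: wf_ge_term => //; apply/fsubsetP => y; rewrite !inE => /andP[yS _].
    rewrite yS orbT andbT; apply: contraNneq xS => <-; exact: yS.
  have n1 := normc_ge0 (c - 1); have n2 := normc_ge0 (Pp W1 V L).
  have : nc (c - 1) * nc (Pp W1 (V `|` U) (L `\` U)) <=
         nc (c - 1) * (fprodR al U * nc (Pp W1 V L)) by rewrite ler_wpM2l.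
  have : (1 + nc (c - 1) * fprodR al U) * nc (Pp W1 V L) <=
         wfactor W al x (x |` S) * nc (Pp W1 V L) by rewrite ler_wpM2r.
  nra.
apply: le_trans key _.
rewrite big_fsetU1 //= -[X in _ <= X]mulrA; apply: ler_wpM2l => //.
exact: wf_ge0.
Qed.

Lemma fset1U_neq0 (x : T) S : x |` S != fset0.
Proof. by apply/eqP => /fsetP /(_ x); rewrite !inE eqxx. Qed.

Lemma kappa_pin W x (Q : {fset {fset T}}) (A : {fset T}) : x \notin A ->
  (forall S, S `<=` A -> S != fset0 -> S \in Q) ->
  kappa W (x |` A) = W [fset x] * kappa (WQ x Q W) A.
Proof.
move=> xA HQ; rewrite /kappa big_mkcond pow_splitU1 //=.
have -> : \prod_(S <- fpowerset A) (if x |` S != fset0 then W (x |` S) else 1) =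
          \prod_(S <- fpowerset A) W (x |` S).
  by apply: eq_bigr => S _; rewrite fset1U_neq0.
rewrite -big_mkcond /=.
rewrite (bigD1_seq fset0) ?fpowersetE ?fsub0set ?fset_uniq //= fsetU0.
have -> : \prod_(S <- fpowerset A | S != fset0) WQ x Q W S =
          \prod_(S <- fpowerset A | S != fset0) (W S * W (x |` S)).
  rewrite big_seq_cond [RHS]big_seq_cond; apply: eq_bigr => S /andP[SA S0].
  by rewrite /WQ HQ // -fpowersetE.
by rewrite big_split /= mulrCA.
Qed.

Lemma Pp_pin W x (Q : {fset {fset T}}) (V L : {fset T}) : x \notin V `|` L ->
  (forall S, S `<=` V `|` L -> S != fset0 -> S \in Q) ->
  Pp W (x |` V) L = z x * W [fset x] * Pp (WQ x Q W) V L.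
Proof.
move=> xVL HQ; rewrite /Pp mulr_sumr big_seq [RHS]big_seq; apply: eq_bigr => Y.
rewrite fpowersetE => YL.
have xVY : x \notin V `|` Y.
  apply: contra xVL; rewrite !inE => /orP[->//|xY]; by rewrite (fsubsetP YL x xY) orbT.
rewrite -fsetUA /Defs.fprod big_fsetU1 //= (@kappa_pin W x Q _ xVY).
  by rewrite -/(Defs.fprod z _); ring.
move=> S SVY S0; apply: HQ S0; apply: fsubset_trans SVY _; exact: fsetUS.
Qed.

Lemma wf_single (W : {fset T} -> R[i]) (a : T -> R) (x : T) : wfactor W a x [fset x] = nc (W [fset x]).
Proof.
apply/le_anti; rewrite wf_ge_base andbT; apply: bigmax_le => // S.
rewrite fpowersetE => SX S0; exfalso; move/negP: S0; apply; apply/eqP.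
apply/fsetP => y; rewrite !inE; apply/negP => yS; have := fsubsetP SX y yS.
by rewrite !inE; case: eqP.
Qed.

Lemma claim_all n : forall W V L x, (#|` L| < n)%N -> claim W V L x.
Proof.
elim: n => [|n IHn] W V L x; first by [].
move=> Ln xV xL VL HW.
have IH : forall W' V' L' y, (#|` L'| < #|` L|)%N -> claim W' V' L' y.
  by move=> W' V' L' y h; apply: IHn; apply: leq_trans h _.
have xVL : x \notin V `|` L by rewrite !inE negb_or xV xL.
set Q := [fset S in fpowerset (V `|` L) | S != fset0].
have HQ1 : forall S, S `<=` V `|` L -> S != fset0 -> S \in Q.
  by move=> S SVL S0; rewrite !inE fpowersetE SVL S0.
have HQ2 : forall S, S \in Q -> (S `<=` V `|` L) && (S != fset0).
  by move=> S; rewrite !inE fpowersetE.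
rewrite (Pp_pin W xVL HQ1) !Normc.normcM.
have hQ := Q_bound IH VL xVL HW HQ2.
have hH : nc (z x) * \prod_(X <- [fset x |` S | S in fpowerset (V `|` L)])
            wfactor W al x X <= r x.
  apply: HW; first by rewrite !inE eqxx.
    move=> X /imfsetP [S /=]; rewrite fpowersetE => SVL ->.
    by rewrite !inE eqxx /= fsetUS.
  by apply/imfsetP; exists fset0; rewrite ?fsetU0 // fpowersetE fsub0set.
have eP : \prod_(X <- [fset x |` S | S in fpowerset (V `|` L)]) wfactor W al x X =
          nc (W [fset x]) * \prod_(S <- Q) wfactor W al x (x |` S).
  rewrite big_imfset /=; last first.
    move=> S1 S2; rewrite !fpowersetE => S1L S2L e; apply/fsetP => y.
    move/fsetP: e => /(_ y); rewrite !inE; case: eqP => [->|]//= _.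
    have h1 : x \notin S1 by apply: contra xVL; apply: (fsubsetP S1L).
    have h2 : x \notin S2 by apply: contra xVL; apply: (fsubsetP S2L).
    by rewrite (negbTE h1) (negbTE h2).
  rewrite (bigD1_seq fset0) ?fpowersetE ?fsub0set ?fset_uniq //= fsetU0 wf_single.
  by rewrite big_fset_condE.
rewrite eP in hH.
have n1 := normc_ge0 (z x); have n2 := normc_ge0 (W [fset x]).
have n3 := normc_ge0 (Pp W V L).
apply: le_trans (_ : nc (z x) * nc (W [fset x]) *
   (\prod_(S <- Q) wfactor W al x (x |` S) * nc (Pp W V L)) <= _).
  by apply: ler_wpM2l => //; rewrite mulr_ge0.
rewrite mulrA -(mulrA (nc (z x))); apply: ler_wpM2r => //.
Qed.
End Main.
Theorem theorem2p1 (R : realType) (T : countType)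
    (z : T -> R[i]) (W : {fset T} -> R[i]) (r : T -> R) :
  (forall x, 0 <= r x < 1) ->
  let alpha := fun x => r x / (1 - r x) in
  (forall x (F : {fset {fset T}}),
      (forall X, X \in F -> x \in X) ->
      [fset x]%fset \in F ->
      Normc.normc (z x) * \prod_(X <- F) wfactor W alpha x X <= r x) ->
  (forall L : {fset T}, Zpart z W L != 0) /\
  (forall (x : T) (L : {fset T}), x \notin L ->
      Normc.normc (zhat z W x L) <= r x) /\
  (forall x, r x < 1) /\
  (forall L : {fset T},
      0 < fprodR (fun y => 1 - r y) L /\
      fprodR (fun y => 1 - r y) L <= Normc.normc (Zpart z W L) /\
      Normc.normc (Zpart z W L) <= fprodR (fun y => 1 + r y) L).
Proof.
move=> hr alpha H.
have HW : forall D, Hyp z r W D.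
  move=> D u uD F HF uF; apply: H => // X XF; by case/andP: (HF X XF).
have cl : forall (V L : {fset T}) x, x \notin V -> x \notin L -> V `&` L = fset0 ->
    Normc.normc (Pp z W (x |` V) L) <= r x * Normc.normc (Pp z W V L).
  move=> V L x xV xL VL; apply: (@claim_all R T z r hr (#|` L|.+1)) => //.
have eZ : forall L, Zpart z W L = Pp z W fset0 L.
  by move=> L; rewrite /Zpart /Pp; apply: eq_bigr => Y _; rewrite fset0U.
have pos : forall L, 0 < fprodR (fun y => 1 - r y) L.
  move=> L; rewrite /fprodR prodr_gt0 // => y _.
  by have /andP[_ h] := hr y; rewrite subr_gt0.
have bnd : forall L, fprodR (fun y => 1 - r y) L <= Normc.normc (Zpart z W L) <=
                     fprodR (fun y => 1 + r y) L.
  elim/fset1U_rect => [|u L uL /andP[IH1 IH2]].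
    rewrite /Zpart /fprodR fpowerset0 !big_seq_fset1 big_seq_fset0.
    rewrite /Defs.fprod big_seq_fset0 /kappa fpowerset0 big_mkcond big_seq_fset1 eqxx mul1r.
    have -> : Normc.normc (1 : R[i]) = 1 by exact: Normc.normc1.
    by rewrite big_seq_fset0 lexx.
  have uuL : u \in u |` L by rewrite !inE eqxx.
  rewrite eZ (@Pp_split R T z W fset0 (u |` L) u uuL).
  have -> : (u |` L) `\ u = L.
    apply/fsetP => y; rewrite !inE; case: eqP => [->|] //=; by rewrite (negbTE uL).
  rewrite -eZ.
  have hb := cl fset0 L u (negbT (in_fset0 u)) uL (fset0I L).
  have := normcB (Zpart z W L) (Pp z W (u |` fset0) L).
  have := normcD (Zpart z W L) (Pp z W (u |` fset0) L).
  rewrite /fprodR !big_fsetU1 //= -!/(fprodR _ L) -eZ in hb *.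
  set a := Normc.normc (Zpart z W L) in hb IH1 IH2 *.
  set b := Normc.normc (Pp z W (u |` fset0) L) in hb *.
  set N := Normc.normc _ => h1 h2.
  have /andP[r0 r1] := hr u.
  have p0 := pos L.
  apply/andP; split; nra.
split.
  move=> L; apply/eqP => Z0; have /andP[h _] := bnd L.
  by move: h; rewrite Z0 Normc.normc0 leNgt pos.
split.
  move=> x L xL.
  have eP : Zpin z W x L = Pp z W (x |` fset0) L.
    by rewrite /Zpin /Pp; apply: eq_bigr => Y _; rewrite fsetU0.
  have hZ : 0 < Normc.normc (Zpart z W L).
    by have /andP[h _] := bnd L; apply: lt_le_trans h; apply: pos.
  rewrite /zhat Normc.normcM Normc.normcV eP ler_pdivrMr // eZ.
  exact: cl (negbT (in_fset0 x)) xL (fset0I L).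
split.
  by move=> x; have /andP[_ h] := hr x.
move=> L; have /andP[h1 h2] := bnd L; by split => //; apply: pos.
Qed.
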